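(* Let $p\ge 0$ be an integer. For all complex $y$ and all complex $x\ne 1$, $$\sum_{n=0}^{\infty}\binom{n}{p} R_n(y)\,x^n=\frac{x^p e^{y}}{(1-x)^{p+1}}\left\{1-e^{-(1-x)y}\sum_{j=0}^{p}\frac{(1-x)^j y^j}{j!}\right\},$$ and for $x=1$, $$\sum_{n=0}^{\infty}\binom{n}{p} R_n(y)=\frac{e^{y}y^{p+1}}{(p+1)!}.$$ (Convention: $0^0=1$.)
   Context: For an integer $n\ge 0$ and complex $y$, $R_n(y)=e^y-1-\frac{y}{1!}-\frac{y^2}{2!}-\dots-\frac{y^n}{n!}=e^y-\sum_{k=0}^n\frac{y^k}{k!}$. $\binom{n}{p}=0$ for $n<p$. *)

(* Defs.v *)
From Stdlib Require Import Reals Factorial.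
From Coquelicot Require Import Coquelicot.
Open Scope C_scope.

Definition cexp (z : C) : C :=
  (exp (Re z) * cos (Im z), exp (Re z) * sin (Im z))%R.

(* binomial coefficient on nat, with binom n p = 0 for n < p *)
Fixpoint binom (n p : nat) : nat :=
  match n, p with
  | _, O => 1%nat
  | O, S _ => 0%nat
  | S n', S p' => (binom n' p' + binom n' (S p'))%nat
  end.

Fixpoint csum (f : nat -> C) (n : nat) : C :=
  match n with
  | O => f O
  | S m => csum f m + f (S m)
  end.

Definition cfact (k : nat) : C := RtoC (INR (Factorial.fact k)).

(* R_n(y) = e^y - sum_{k=0}^n y^k / k!  (Cpow: c ^ 0 = 1, so 0^0 = 1) *)
Definition Rrem (n : nat) (y : C) : C :=
  cexp y - csum (fun k => Cpow y k / cfact k) n.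

(* Main.v *)
Require Import Defs.
From Stdlib Require Import Reals Lia Lra.
From Coquelicot Require Import Coquelicot.
Open Scope C_scope.

Lemma csum_ext (f g : nat -> C) n : (forall k, (k <= n)%nat -> f k = g k) -> csum f n = csum g n.
Proof. induction n; intros H; simpl. apply H; lia. rewrite IHn, H; auto; intros; apply H; lia. Qed.

Lemma csum_plus (f g : nat -> C) n : csum (fun k => f k + g k) n = csum f n + csum g n.
Proof. induction n; simpl; auto. rewrite IHn; ring. Qed.

Lemma csum_scal (c : C) (f : nat -> C) n : c * csum f n = csum (fun k => c * f k) n.
Proof. induction n; simpl; auto. rewrite <- IHn; ring. Qed.

Lemma csum_swap (f : nat -> nat -> C) n q :
  csum (fun i => csum (fun j => f i j) q) n = csum (fun j => csum (fun i => f i j) n) q.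
Proof.
  induction n; simpl; auto.
  rewrite IHn, <- csum_plus. reflexivity.
Qed.

Lemma csum_zero (f : nat -> C) n : (forall k, (k <= n)%nat -> f k = 0) -> csum f n = 0.
Proof.
  intros H; rewrite (csum_ext f (fun _ => 0) n H). clear H.
  induction n; simpl; auto. rewrite IHn; ring.
Qed.

Lemma csum_sum_n (f : nat -> C) n : csum f n = sum_n (G:=C_AbelianMonoid) f n.
Proof.
  induction n. simpl. rewrite sum_O. reflexivity.
  simpl. rewrite sum_Sn, <- IHn. reflexivity.
Qed.

Lemma binom_0 n : binom n 0 = 1%nat. Proof. destruct n; reflexivity. Qed.
Lemma binom_S n p : binom (S n) (S p) = (binom n p + binom n (S p))%nat. Proof. reflexivity. Qed.
Lemma binom_lt n p : (n < p)%nat -> binom n p = 0%nat.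
Proof.
  revert p; induction n; intros p H; destruct p; try lia; simpl; auto.
  rewrite !IHn; lia.
Qed.
Lemma binom_le_pow n p : (binom n p <= 2 ^ n)%nat.
Proof.
  revert p; induction n; intros p.
  - destruct p; simpl; lia.
  - destruct p. rewrite binom_0. pose proof (IHn 0%nat). rewrite binom_0 in H. simpl. lia.
    rewrite binom_S. pose proof (IHn p); pose proof (IHn (S p)). simpl. lia.
Qed.

Lemma binom_C n p : (p <= n)%nat -> INR (binom n p) = Binomial.C n p.
Proof.
  revert p; induction n; intros p H.
  - destruct p; [|lia]. rewrite C_n_n. reflexivity.
  - destruct p.
    + rewrite binom_0. unfold Binomial.C. rewrite Nat.sub_0_r. simpl (Factorial.fact 0).
      change (INR 1) with 1%R. rewrite Rmult_1_l. unfold Rdiv. rewrite Rinv_r; auto. apply INR_fact_neq_0.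
    + rewrite binom_S, plus_INR. destruct (Nat.eq_dec p n).
      * subst. rewrite (binom_lt n (S n)) by lia. rewrite IHn by lia. rewrite !C_n_n. simpl; ring.
      * rewrite !IHn by lia. apply pascal. lia.
Qed.

Lemma cfact_S n : cfact (S n) = RtoC (INR (S n)) * cfact n.
Proof. unfold cfact. rewrite fact_simpl, mult_INR, RtoC_mult. reflexivity. Qed.

Lemma cfact_nz n : cfact n <> 0.
Proof. unfold cfact. intro H. apply RtoC_inj in H. revert H. apply INR_fact_neq_0. Qed.

Lemma RtoC_nz (r : R) : (r <> 0)%R -> RtoC r <> 0.
Proof. intros H E. apply H. apply RtoC_inj in E. exact E. Qed.

Lemma binom_fact k j : (j <= k)%nat ->
  RtoC (INR (binom k j)) / cfact k = / (cfact j * cfact (k - j)).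
Proof.
  intros H. rewrite binom_C by auto. unfold Binomial.C, cfact.
  assert (H0 := INR_fact_neq_0 k). assert (H1 := INR_fact_neq_0 j). assert (H2 := INR_fact_neq_0 (k-j)).
  rewrite <- RtoC_mult, <- RtoC_div, <- RtoC_inv. f_equal. field. split; auto.
  all: try apply Rmult_integral_contrapositive; auto.
Qed.

Lemma der_mult (f g : R -> R) t df dg : is_derive f t df -> is_derive g t dg ->
  is_derive (fun s => f s * g s)%R t (df * g t + f t * dg)%R.
Proof. intros. exact (is_derive_mult (K:=R_AbsRing) f g t df dg H H0 Rmult_comm). Qed.
Lemma der_plus (f g : R -> R) t df dg : is_derive f t df -> is_derive g t dg ->
  is_derive (fun s => f s + g s)%R t (df + dg)%R.
Proof. intros. exact (is_derive_plus (K:=R_AbsRing) (V:=R_NormedModule) f g t df dg H H0). Qed.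
Lemma der_minus (f g : R -> R) t df dg : is_derive f t df -> is_derive g t dg ->
  is_derive (fun s => f s - g s)%R t (df - dg)%R.
Proof. intros. exact (is_derive_minus (K:=R_AbsRing) (V:=R_NormedModule) f g t df dg H H0). Qed.
Lemma der_ext (f g : R -> R) t l : (forall s, f s = g s) -> is_derive f t l -> is_derive g t l.
Proof. intros. exact (is_derive_ext (K:=R_AbsRing) (V:=R_NormedModule) f g t l H H0). Qed.
Lemma der_eq (f : R -> R) t l l' : is_derive f t l -> l = l' -> is_derive f t l'.
Proof. intros; subst; auto. Qed.

Ltac Rring := match goal with |- ?x = ?y => change (@eq R x y) end; ring.

Definition cder (f : R -> C) (t : R) (l : C) :=
  is_derive (fun s => fst (f s)) t (fst l) /\ is_derive (fun s => snd (f s)) t (snd l).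

Lemma cder_eq f t l l' : cder f t l -> l = l' -> cder f t l'.
Proof. intros; subst; auto. Qed.

Lemma cder_ext f g t l : (forall s, f s = g s) -> cder f t l -> cder g t l.
Proof.
  intros E [H1 H2]; split.
  apply (der_ext (fun s => fst (f s))); auto. intros; rewrite E; auto.
  apply (der_ext (fun s => snd (f s))); auto. intros; rewrite E; auto.
Qed.

Lemma cder_plus f g t lf lg : cder f t lf -> cder g t lg -> cder (fun s => f s + g s) t (lf + lg).
Proof. intros [A1 A2] [B1 B2]; split; simpl; apply der_plus; auto. Qed.

Lemma cder_mult f g t lf lg : cder f t lf -> cder g t lg ->
  cder (fun s => f s * g s) t (lf * g t + f t * lg).
Proof.
  intros [A1 A2] [B1 B2]; split; simpl.
  - eapply der_eq. apply der_minus; apply der_mult; eauto. simpl; ring.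
  - eapply der_eq. apply der_plus; apply der_mult; eauto. simpl; ring.
Qed.

Lemma cder_const c t : cder (fun _ => c) t 0.
Proof. split; simpl; exact (is_derive_const (K:=R_AbsRing) (V:=R_NormedModule) _ t). Qed.

Lemma cder_lin z t : cder (fun s => RtoC s * z) t z.
Proof.
  destruct z as [a b]; split; simpl.
  - apply (der_ext (fun s => s * a)%R). intros; ring. auto_derive; auto; ring.
  - apply (der_ext (fun s => s * b)%R). intros; ring. auto_derive; auto; ring.
Qed.

Lemma cexp_lin_fst a b s : fst (cexp (RtoC s * (a, b))) = (exp (s * a) * cos (s * b))%R.
Proof. unfold cexp, Cmult, RtoC, Re, Im; cbn [fst snd]. f_equal; f_equal; ring. Qed.
Lemma cexp_lin_snd a b s : snd (cexp (RtoC s * (a, b))) = (exp (s * a) * sin (s * b))%R.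
Proof. unfold cexp, Cmult, RtoC, Re, Im; cbn [fst snd]. f_equal; f_equal; ring. Qed.

Lemma cder_cexp w t : cder (fun s => cexp (RtoC s * w)) t (w * cexp (RtoC t * w)).
Proof.
  destruct w as [a b]; split.
  - apply (der_ext (fun s => exp (s * a) * cos (s * b))%R).
    intros; rewrite cexp_lin_fst; auto.
    eapply der_eq. auto_derive; auto.
    unfold Cmult at 1. cbn [fst snd]. rewrite cexp_lin_fst, cexp_lin_snd. Rring.
  - apply (der_ext (fun s => exp (s * a) * sin (s * b))%R).
    intros; rewrite cexp_lin_snd; auto.
    eapply der_eq. auto_derive; auto.
    unfold Cmult at 1. cbn [fst snd]. rewrite cexp_lin_fst, cexp_lin_snd. Rring.
Qed.

Lemma cder_pow z k t : cder (fun s => Cpow (RtoC s * z) k) t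
  (RtoC (INR k) * z * Cpow (RtoC t * z) (pred k)).
Proof.
  induction k.
  - apply (cder_ext (fun _ => RtoC 1)). intros; reflexivity.
    eapply cder_eq. exact (cder_const 1 t). cbn [pred Cpow]. change (INR 0) with 0%R. ring.
  - apply (cder_ext (fun s => (RtoC s * z) * Cpow (RtoC s * z) k)).
    intros; rewrite Cpow_S; reflexivity.
    eapply cder_eq. exact (cder_mult (fun s => RtoC s * z) (fun s => Cpow (RtoC s * z) k) t _ _ (cder_lin z t) IHk).
    cbv beta. rewrite S_INR, RtoC_plus. destruct k.
    + change (INR 0) with 0%R. cbn [pred Cpow]. ring.
    + cbn [pred]. rewrite (Cpow_S _ k). ring.
Qed.

Lemma cder_csum (F : nat -> R -> C) (D : nat -> C) t N :
  (forall k, cder (F k) t (D k)) -> cder (fun s => csum (fun k => F k s) N) t (csum D N).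
Proof.
  intros H; induction N; simpl. apply H.
  apply cder_plus; auto.
Qed.

Definition E (N : nat) (w : C) : C := csum (fun k => Cpow w k / cfact k) N.

Lemma cexp_plus u v : cexp (u + v) = cexp u * cexp v.
Proof.
  destruct u as [a b], v as [c d]. unfold cexp, Cmult, Cplus, Re, Im; cbn [fst snd].
  rewrite exp_plus, cos_plus, sin_plus. f_equal; ring.
Qed.

Lemma cexp_0 : cexp 0 = 1.
Proof. unfold cexp, Re, Im, RtoC; cbn [fst snd]. rewrite exp_0, cos_0, sin_0. f_equal; ring. Qed.

Lemma cexp_opp u : cexp u * cexp (- u) = 1.
Proof. rewrite <- cexp_plus. replace (u + - u) with (RtoC 0) by ring. apply cexp_0. Qed.

Lemma Cmod_cexp w : Cmod (cexp w) = exp (fst w).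
Proof.
  destruct w as [a b]. unfold Cmod, cexp, Re, Im; cbn [fst snd].
  replace ((exp a * cos b) ^ 2 + (exp a * sin b) ^ 2)%R with ((exp a) ^ 2)%R.
  apply sqrt_pow2. left; apply exp_pos.
  pose proof (sin2_cos2 b). unfold Rsqr in H. nra.
Qed.

Lemma E_0 N : E N 0 = 1.
Proof.
  unfold E; induction N; cbn [csum].
  - unfold cfact. cbn [Cpow]. change (Factorial.fact 0) with 1%nat. change (INR 1) with 1%R. field.
  - rewrite IHN, Cpow_S. unfold Cdiv. ring.
Qed.

Lemma E_deriv_id z w N :
  csum (fun k => RtoC (INR k) * z * Cpow w (pred k) * / cfact k + Cpow w k * 0) N
  = z * (E N w - Cpow w N / cfact N).
Proof.
  unfold E; induction N.
  - simpl. change (INR 0) with 0%R. ring.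
  - cbn [csum]. rewrite IHN. rewrite cfact_S. cbn [pred]. rewrite (Cpow_S w N).
    assert (RtoC (INR (S N)) <> 0) by (apply RtoC_nz; apply not_0_INR; lia).
    pose proof (cfact_nz N). field. auto.
Qed.

Lemma g_deriv z N t :
  cder (fun s => cexp (RtoC s * - z) * E N (RtoC s * z)) t
       (- (cexp (RtoC t * - z) * z * Cpow (RtoC t * z) N / cfact N)).
Proof.
  eapply cder_eq.
  apply (cder_mult (fun s => cexp (RtoC s * - z)) (fun s => E N (RtoC s * z))).
  apply cder_cexp.
  unfold E. apply cder_csum. intros k.
  apply (cder_ext (fun s => Cpow (RtoC s * z) k * / cfact k)). intros; reflexivity.
  apply (cder_mult (fun s => Cpow (RtoC s * z) k) (fun _ => / cfact k)).
  apply cder_pow. apply cder_const.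
  rewrite E_deriv_id. unfold E, Cdiv. ring.
Qed.

Lemma MVT01 (f df : R -> R) K : (forall t, is_derive f t (df t)) ->
  (forall t, (0 <= t <= 1)%R -> (Rabs (df t) <= K)%R) -> (Rabs (f 1 - f 0) <= K)%R.
Proof.
  intros Hd Hb.
  destruct (MVT_gen f 0 1 df) as [c [Hc E1]].
  - intros; apply Hd.
  - intros. apply continuity_pt_filterlim. exact (ex_derive_continuous (K:=R_AbsRing) (V:=R_NormedModule) f x (ex_intro _ (df x) (Hd x))).
  - rewrite Rmin_left in Hc by lra. rewrite Rmax_right in Hc by lra.
    rewrite E1. rewrite Rminus_0_r, Rmult_1_r. apply Hb; auto.
Qed.

Lemma exp_mono x y : (x <= y)%R -> (exp x <= exp y)%R.
Proof. intros [H|H]. left; apply exp_increasing; auto. subst; lra. Qed.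

Definition Kb (z : C) (N : nat) : R := (exp (Cmod z) * Cmod z * Cmod z ^ N / INR (Factorial.fact N))%R.

Lemma Kb_bound z N c : (0 <= c <= 1)%R ->
  (Cmod (- (cexp (RtoC c * - z) * z * Cpow (RtoC c * z) N / cfact N)) <= Kb z N)%R.
Proof.
  intros Hc. rewrite Cmod_opp, Cmod_div by apply cfact_nz.
  rewrite !Cmod_mult, Cmod_cexp, Cmod_pow, Cmod_mult, Cmod_R.
  unfold cfact. rewrite Cmod_R. rewrite (Rabs_pos_eq (INR _)) by apply pos_INR.
  rewrite (Rabs_pos_eq c) by lra. unfold Kb.
  assert (Hf := INR_fact_lt_0 N).
  apply Rmult_le_compat_r. left; apply Rinv_0_lt_compat; auto.
  assert (H0 := Cmod_ge_0 z).
  apply Rmult_le_compat.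
  - apply Rmult_le_pos. left; apply exp_pos. auto.
  - apply pow_le. apply Rmult_le_pos; lra.
  - apply Rmult_le_compat_r; auto.
    destruct z as [a b]. cbn [fst snd Cmult RtoC Copp].
    assert (Hr := re_le_Cmod (a, b)). unfold Re in Hr; cbn [fst] in Hr.
    apply exp_mono. pose proof (Rle_abs (-a)). rewrite Rabs_Ropp in H. nra.
  - apply pow_incr. split. apply Rmult_le_pos; lra. nra.
Qed.

Lemma fst_le_Cmod w : (Rabs (fst w) <= Cmod w)%R.
Proof. eapply Rle_trans. apply Rmax_l. apply Rmax_Cmod. Qed.
Lemma snd_le_Cmod w : (Rabs (snd w) <= Cmod w)%R.
Proof. eapply Rle_trans. apply Rmax_r. apply Rmax_Cmod. Qed.

Lemma sqrt2_le_2 : (sqrt 2 <= 2)%R.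
Proof.
  replace 2%R with (sqrt (2 ^ 2)) at 2 by (apply sqrt_pow2; lra).
  apply sqrt_le_1_alt. lra.
Qed.

Lemma Kb_pos z N : (0 <= Kb z N)%R.
Proof.
  unfold Kb. assert (Hf := INR_fact_lt_0 N). assert (H0 := Cmod_ge_0 z).
  apply Rmult_le_pos. apply Rmult_le_pos. apply Rmult_le_pos. left; apply exp_pos. auto.
  apply pow_le; auto. left; apply Rinv_0_lt_compat; auto.
Qed.

Lemma exp_err z N : (Cmod (cexp z - E N z) <= exp (Cmod z) * (2 * Kb z N))%R.
Proof.
  set (g := fun s => cexp (RtoC s * - z) * E N (RtoC s * z)).
  set (dg := fun t => - (cexp (RtoC t * - z) * z * Cpow (RtoC t * z) N / cfact N)).
  assert (Hd : forall t, cder g t (dg t)) by (intros; apply g_deriv).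
  assert (B1 : (Rabs (fst (g 1%R) - fst (g 0%R)) <= Kb z N)%R).
  { apply (MVT01 (fun s => fst (g s)) (fun t => fst (dg t))). intros t; apply (Hd t).
    intros t Ht. eapply Rle_trans. apply fst_le_Cmod. apply Kb_bound; auto. }
  assert (B2 : (Rabs (snd (g 1%R) - snd (g 0%R)) <= Kb z N)%R).
  { apply (MVT01 (fun s => snd (g s)) (fun t => snd (dg t))). intros t; apply (Hd t).
    intros t Ht. eapply Rle_trans. apply snd_le_Cmod. apply Kb_bound; auto. }
  assert (G1 : g 1%R = cexp (-z) * E N z).
  { unfold g. replace (RtoC 1 * - z) with (-z) by ring. replace (RtoC 1 * z) with z by ring. auto. }
  assert (G0 : g 0%R = 1).
  { unfold g. replace (RtoC 0 * - z) with (RtoC 0) by ring. replace (RtoC 0 * z) with (RtoC 0) by ring.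
    rewrite cexp_0, E_0; ring. }
  assert (Hm : (Cmod (g 1%R - g 0%R) <= 2 * Kb z N)%R).
  { eapply Rle_trans. apply Cmod_2Rmax.
    assert (Hk := Kb_pos z N).
    apply Rmult_le_compat; try lra. apply sqrt_pos.
    eapply Rle_trans. 2: apply Rmax_l. apply Rabs_pos.
    apply sqrt2_le_2.
    apply Rmax_lub.
    - unfold Cminus, Cplus, Copp; cbn [fst snd]. exact B1.
    - unfold Cminus, Cplus, Copp; cbn [fst snd]. exact B2. }
  assert (Eq : cexp z - E N z = - cexp z * (g 1%R - g 0%R)).
  { rewrite G1, G0. pose proof (cexp_opp z) as H.
    replace (cexp z - E N z) with (cexp z - (cexp z * cexp (- z)) * E N z) by (rewrite H; ring).
    ring. }
  rewrite Eq, Cmod_mult, Cmod_opp, Cmod_cexp.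
  apply Rmult_le_compat. left; apply exp_pos. apply Cmod_ge_0.
  apply exp_mono. pose proof (fst_le_Cmod z). pose proof (Rle_abs (fst z)). lra.
  exact Hm.
Qed.

Definition cvn (u : nat -> C) (l : C) :=
  forall eps : R, (0 < eps)%R -> exists N, forall n, (N <= n)%nat -> (Cmod (u n - l) < eps)%R.

Lemma cvn_is_series a l : cvn (fun N => csum a N) l -> is_series (V := C_NormedModule) a l.
Proof.
  intros H. unfold is_series. apply filterlim_locally. intros eps.
  destruct (H eps (cond_pos eps)) as [N HN]. exists N. intros n Hn.
  apply norm_compat1. rewrite <- csum_sum_n. apply HN; auto.
Qed.

Lemma cvn_bound u l (e : nat -> R) : (forall n, (Cmod (u n - l) <= e n)%R) -> Un_cv e 0 -> cvn u l.
Proof.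
  intros Hb Hc eps He. destruct (Hc eps He) as [N HN]. exists N. intros n Hn.
  specialize (HN n Hn). unfold R_dist in HN. rewrite Rminus_0_r in HN.
  eapply Rle_lt_trans. apply Hb. eapply Rle_lt_trans. apply Rle_abs. auto.
Qed.

Lemma cvn_ext u v l : (forall n, u n = v n) -> cvn u l -> cvn v l.
Proof. intros E H eps He. destruct (H eps He) as [N HN]. exists N. intros; rewrite <- E; auto. Qed.

Lemma cvn_const c : cvn (fun _ => c) c.
Proof. intros eps He. exists 0%nat. intros. replace (c - c) with (RtoC 0) by ring. rewrite Cmod_0. auto. Qed.

Lemma cvn_plus u v l m : cvn u l -> cvn v m -> cvn (fun n => u n + v n) (l + m).
Proof.
  intros Hu Hv eps He.
  destruct (Hu (eps/2)%R) as [N1 H1]. lra. destruct (Hv (eps/2)%R) as [N2 H2]. lra.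
  exists (N1 + N2)%nat. intros n Hn.
  replace (u n + v n - (l + m)) with ((u n - l) + (v n - m)) by ring.
  eapply Rle_lt_trans. apply Cmod_triangle.
  assert (A1 := H1 n ltac:(lia)). assert (A2 := H2 n ltac:(lia)). lra.
Qed.

Lemma cvn_scal c u l : cvn u l -> cvn (fun n => c * u n) (c * l).
Proof.
  intros Hu eps He.
  assert (Hc := Cmod_ge_0 c).
  destruct (Hu (eps / (Cmod c + 1))%R) as [N HN].
  apply Rdiv_lt_0_compat; lra.
  exists N. intros n Hn. replace (c * u n - c * l) with (c * (u n - l)) by ring.
  rewrite Cmod_mult. specialize (HN n Hn).
  apply Rle_lt_trans with ((Cmod c + 1) * Cmod (u n - l))%R.
  apply Rmult_le_compat_r. apply Cmod_ge_0. lra.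
  apply Rmult_lt_reg_l with (/ (Cmod c + 1))%R. apply Rinv_0_lt_compat; lra.
  rewrite <- Rmult_assoc, Rinv_l by lra. rewrite Rmult_1_l.
  unfold Rdiv in HN. rewrite Rmult_comm. exact HN.
Qed.

Lemma cvn_csum (F : nat -> nat -> C) (L : nat -> C) p :
  (forall j, (j <= p)%nat -> cvn (F j) (L j)) ->
  cvn (fun n => csum (fun j => F j n) p) (csum L p).
Proof.
  induction p; intros H; simpl.
  - apply H; lia.
  - apply cvn_plus. apply IHp; intros; apply H; lia. apply H; lia.
Qed.

Lemma cvn_shift u v j L : (forall M, u (M + j)%nat = v M) -> cvn v L -> cvn u L.
Proof.
  intros E H eps He. destruct (H eps He) as [N HN]. exists (N + j)%nat. intros n Hn.
  replace n with ((n - j) + j)%nat by lia. rewrite E. apply HN; lia.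
Qed.

Lemma Un_cv_scal (u : nat -> R) c : Un_cv u 0 -> Un_cv (fun n => c * u n)%R 0.
Proof.
  intros H. replace 0%R with (c * 0)%R by ring. apply CV_mult; auto.
  intros eps He; exists 0%nat; intros; unfold R_dist; rewrite Rminus_diag, Rabs_R0; auto.
Qed.

Lemma Kb_cv z : Un_cv (fun N => exp (Cmod z) * (2 * Kb z N))%R 0.
Proof.
  apply (Un_cv_ext (fun N => (exp (Cmod z) * 2 * (exp (Cmod z) * Cmod z)) * (Cmod z ^ N / INR (Factorial.fact N)))%R).
  intros; unfold Kb, Rdiv; ring.
  apply Un_cv_scal. apply cv_speed_pow_fact.
Qed.

Lemma E_cv w : cvn (fun N => E N w) (cexp w).
Proof.
  apply (cvn_bound _ _ (fun N => (exp (Cmod w) * (2 * Kb w N))%R)).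
  intros n. rewrite <- Cmod_opp. replace (- (E n w - cexp w)) with (cexp w - E n w) by ring.
  apply exp_err. apply Kb_cv.
Qed.

Definition bC (n p : nat) : C := RtoC (INR (binom n p)).

Fixpoint Bs (x : C) (p m : nat) : C :=
  match m with O => 0 | S m' => Bs x p m' + bC m' p * Cpow x m' end.

Lemma abel x y p N :
  csum (fun n => bC n p * Rrem n y * Cpow x n) N
  = Bs x p (S N) * Rrem N y + csum (fun k => Cpow y k / cfact k * Bs x p k) N.
Proof.
  induction N.
  - cbn [csum Bs]. unfold Cdiv. ring.
  - cbn [csum]. rewrite IHN. cbn [Bs].
    unfold Rrem. cbn [csum]. unfold Cdiv. ring.
Qed.

Definition Q (x : C) (p m : nat) : C :=
  csum (fun j => bC m j * Cpow x (p - j) * Cpow (1 - x) j) p.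

Lemma Q_S x p m : Q x (S p) m = x * Q x p m + bC m (S p) * Cpow (1 - x) (S p).
Proof.
  unfold Q. cbn [csum]. rewrite Nat.sub_diag. f_equal.
  rewrite csum_scal. apply csum_ext. intros k Hk.
  replace (S p - k)%nat with (S (p - k)) by lia. rewrite Cpow_S. ring.
  cbn [Cpow]. ring.
Qed.

Lemma bC_0 n : bC n 0 = 1.
Proof. unfold bC. rewrite binom_0. reflexivity. Qed.
Lemma bC_S n p : bC (S n) (S p) = bC n p + bC n (S p).
Proof. unfold bC. rewrite binom_S, plus_INR, RtoC_plus. reflexivity. Qed.
Lemma bC_lt n p : (n < p)%nat -> bC n p = 0.
Proof. intros; unfold bC. rewrite binom_lt by auto. reflexivity. Qed.

Lemma Q_step x p m : Q x p m - x * Q x p (S m) = Cpow (1 - x) (S p) * bC m p.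
Proof.
  revert m; induction p; intros m.
  - unfold Q. cbn [csum]. rewrite !bC_0. cbn [Cpow Nat.sub]. ring.
  - rewrite !Q_S. rewrite (Cpow_S (1 - x) (S p)).
    replace (x * Q x p m + bC m (S p) * Cpow (1 - x) (S p) -
             x * (x * Q x p (S m) + bC (S m) (S p) * Cpow (1 - x) (S p)))
      with (x * (Q x p m - x * Q x p (S m)) + (bC m (S p) - x * bC (S m) (S p)) * Cpow (1 - x) (S p)) by ring.
    rewrite IHp, bC_S. ring.
Qed.

Lemma Q_0 x p : Q x p 0 = Cpow x p.
Proof.
  induction p.
  - unfold Q. cbn [csum]. rewrite bC_0. cbn [Cpow Nat.sub]. ring.
  - rewrite Q_S, IHp, bC_lt by lia. rewrite (Cpow_S x p). ring.
Qed.

Lemma B_closed x p m : Cpow (1 - x) (S p) * Bs x p m = Cpow x p - Cpow x m * Q x p m.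
Proof.
  induction m.
  - cbn [Bs Cpow]. rewrite Q_0. ring.
  - cbn [Bs]. rewrite Cmult_plus_distr_l, IHm.
    replace (Cpow (1 - x) (S p) * (bC m p * Cpow x m)) with (Cpow x m * (Cpow (1 - x) (S p) * bC m p)) by ring.
    rewrite <- Q_step. rewrite (Cpow_S x m). ring.
Qed.

Lemma Bs_one p m : Bs 1 p m = bC m (S p).
Proof.
  induction m.
  - cbn [Bs]. rewrite bC_lt by lia. reflexivity.
  - cbn [Bs]. rewrite IHm, Cpow_1_l, bC_S. ring.
Qed.

Definition Fs (j : nat) (w : C) (N : nat) : C := csum (fun k => bC k j / cfact k * Cpow w k) N.

Lemma bC_nn n : bC n n = 1.
Proof.
  unfold bC. induction n. reflexivity.
  rewrite binom_S, (binom_lt n (S n)) by lia. rewrite Nat.add_0_r. exact IHn.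
Qed.

Lemma cfact_0 : cfact 0 = 1.
Proof. unfold cfact. change (Factorial.fact 0) with 1%nat. change (INR 1) with 1%R. reflexivity. Qed.

Lemma Fs_jj j w : Fs j w j = Cpow w j / cfact j.
Proof.
  unfold Fs. destruct j.
  - cbn [csum]. rewrite bC_0. unfold Cdiv; ring.
  - cbn [csum]. rewrite csum_zero. rewrite bC_nn. unfold Cdiv; ring.
    intros k Hk. rewrite bC_lt by lia. unfold Cdiv; ring.
Qed.

Lemma Fs_shift j w M : Fs j w (M + j) = Cpow w j / cfact j * E M w.
Proof.
  induction M as [|M IHM].
  - simpl (0 + j)%nat. rewrite Fs_jj. unfold E. cbn [csum Cpow]. rewrite cfact_0.
    field. apply cfact_nz.
  - change (S M + j)%nat with (S (M + j)). unfold Fs. cbn [csum]. fold (Fs j w (M + j)).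
    rewrite IHM. unfold bC. rewrite binom_fact by lia.
    replace (S (M + j) - j)%nat with (S M) by lia.
    replace (S (M + j)) with (S M + j)%nat by lia. rewrite Cpow_add_r.
    unfold E; cbn [csum].
    pose proof (cfact_nz j). pose proof (cfact_nz (S M)). field. auto.
Qed.

Lemma Fs_cv j w : cvn (Fs j w) (Cpow w j / cfact j * cexp w).
Proof.
  apply (cvn_shift _ (fun M => Cpow w j / cfact j * E M w) j).
  apply Fs_shift. apply cvn_scal. apply E_cv.
Qed.

Lemma Cmod_bC n p : (Cmod (bC n p) <= 2 ^ n)%R.
Proof.
  unfold bC. rewrite Cmod_R, Rabs_pos_eq by apply pos_INR.
  replace (2 ^ n)%R with (INR (2 ^ n)). apply le_INR, binom_le_pow.
  rewrite pow_INR. reflexivity.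
Qed.

Lemma Bs_bound x p N : (Cmod (Bs x p (S N)) <= 4 ^ N * (1 + Cmod x) ^ N)%R.
Proof.
  assert (HM := Cmod_ge_0 x).
  induction N.
  - cbn [Bs Cpow]. replace (0 + bC 0 p * 1) with (bC 0 p) by ring.
    pose proof (Cmod_bC 0 p). simpl in *. lra.
  - change (Bs x p (S (S N))) with (Bs x p (S N) + bC (S N) p * Cpow x (S N)).
    eapply Rle_trans. apply Cmod_triangle. rewrite Cmod_mult, Cmod_pow.
    assert (H1 := Cmod_bC (S N) p).
    assert (H2 : (Cmod x ^ S N <= (1 + Cmod x) ^ S N)%R) by (apply pow_incr; lra).
    assert (H3 : (2 ^ N <= 4 ^ N)%R) by (apply pow_incr; lra).
    assert (H4 : (0 <= (1 + Cmod x) ^ N)%R) by (apply pow_le; lra).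
    assert (H5 : (0 <= Cmod x ^ S N)%R) by (apply pow_le; lra).
    assert (H6 : (0 <= 2 ^ N)%R) by (apply pow_le; lra).
    cbn [pow] in *.
    assert (H7 : (2 * 2 ^ N * (Cmod x * Cmod x ^ N) <= 2 * 4 ^ N * ((1 + Cmod x) * (1 + Cmod x) ^ N))%R).
    { apply Rmult_le_compat; try lra. }
    assert (H8 : (Cmod (bC (S N) p) * (Cmod x * Cmod x ^ N) <= 2 * 2 ^ N * (Cmod x * Cmod x ^ N))%R)
      by (apply Rmult_le_compat_r; lra).
    assert (H9 : (4 ^ N * (1 + Cmod x) ^ N <= 4 ^ N * ((1 + Cmod x) * (1 + Cmod x) ^ N))%R).
    { apply Rmult_le_compat_l. apply pow_le; lra. nra. }
    assert (H10 : (0 <= 4 ^ N * ((1 + Cmod x) * (1 + Cmod x) ^ N))%R).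
    { apply Rmult_le_pos. apply pow_le; lra. nra. }
    set (U := (4 ^ N * ((1 + Cmod x) * (1 + Cmod x) ^ N))%R) in *.
    replace (2 * 4 ^ N * ((1 + Cmod x) * (1 + Cmod x) ^ N))%R with (2 * U)%R in H7 by (unfold U; ring).
    replace (4 * 4 ^ N * ((1 + Cmod x) * (1 + Cmod x) ^ N))%R with (4 * U)%R by (unfold U; ring).
    lra.
Qed.

Lemma BR_cv x p y : cvn (fun N => Bs x p (S N) * Rrem N y) 0.
Proof.
  set (M := (4 * (1 + Cmod x) * Cmod y)%R).
  set (c := (2 * exp (Cmod y) * exp (Cmod y) * Cmod y)%R).
  apply (cvn_bound _ _ (fun N => c * (M ^ N / INR (Factorial.fact N)))%R).
  2: apply Un_cv_scal; apply cv_speed_pow_fact.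
  intros n. replace (Bs x p (S n) * Rrem n y - 0) with (Bs x p (S n) * (cexp y - E n y)) by (unfold Rrem, E; ring).
  rewrite Cmod_mult.
  assert (A1 := Bs_bound x p n). assert (A2 := exp_err y n).
  assert (P1 := Cmod_ge_0 (Bs x p (S n))). assert (P2 := Cmod_ge_0 (cexp y - E n y)).
  eapply Rle_trans. apply Rmult_le_compat; eauto.
  unfold M, c, Kb. rewrite !Rpow_mult_distr. unfold Rdiv. right; ring.
Qed.

Lemma csum_minus (f g : nat -> C) n : csum (fun k => f k - g k) n = csum f n - csum g n.
Proof. induction n; simpl; auto. rewrite IHn; ring. Qed.

Lemma T_id x p y N :
  Cpow (1 - x) (S p) * csum (fun k => Cpow y k / cfact k * Bs x p k) N
  = Cpow x p * E N y - csum (fun j => Cpow x (p - j) * Cpow (1 - x) j * Fs j (x * y) N) p.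
Proof.
  rewrite csum_scal.
  rewrite (csum_ext _ (fun k => Cpow x p * (Cpow y k / cfact k) -
     csum (fun j => Cpow x (p - j) * Cpow (1 - x) j * (bC k j / cfact k * Cpow (x * y) k)) p)).
  - rewrite csum_minus. unfold E. rewrite <- csum_scal. f_equal.
    rewrite csum_swap. apply csum_ext. intros j _. unfold Fs. rewrite csum_scal. reflexivity.
  - intros k _.
    replace (Cpow (1 - x) (S p) * (Cpow y k / cfact k * Bs x p k))
      with (Cpow y k / cfact k * (Cpow (1 - x) (S p) * Bs x p k)) by ring.
    rewrite B_closed. unfold Q.
    rewrite (csum_ext (fun j => Cpow x (p - j) * Cpow (1 - x) j * (bC k j / cfact k * Cpow (x * y) k))
      (fun j => (Cpow y k / cfact k * Cpow x k) * (bC k j * Cpow x (p - j) * Cpow (1 - x) j))).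
    rewrite <- csum_scal. unfold Cdiv. ring.
    intros j _. rewrite Cpow_mult_l. unfold Cdiv. ring.
Qed.

Lemma cvn_eq u l l' : cvn u l -> l = l' -> cvn u l'.
Proof. intros; subst; auto. Qed.

Lemma csum_final x y p :
  csum (fun j => Cpow x (p - j) * Cpow (1 - x) j * (Cpow (x * y) j / cfact j * cexp (x * y))) p
  = Cpow x p * cexp y * cexp (- ((1 - x) * y)) * csum (fun j => Cpow (1 - x) j * Cpow y j / cfact j) p.
Proof.
  rewrite csum_scal. apply csum_ext. intros j Hj.
  assert (Ex : cexp (x * y) = cexp y * cexp (- ((1 - x) * y))).
  { rewrite <- cexp_plus. f_equal. ring. }
  rewrite Ex, Cpow_mult_l.
  replace (Cpow x p) with (Cpow x (p - j) * Cpow x j).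
  unfold Cdiv; ring.
  rewrite <- Cpow_add_r. f_equal. lia.
Qed.

Theorem mainTheorem3 (p : nat) :
  (forall (y x : C), x <> 1 ->
     is_series (V := C_NormedModule)
       (fun n => RtoC (INR (binom n p)) * Rrem n y * Cpow x n)
       (Cpow x p * cexp y / Cpow (1 - x) (S p) *
        (1 - cexp (- ((1 - x) * y)) *
             csum (fun j => Cpow (1 - x) j * Cpow y j / cfact j) p)))
  /\
  (forall y : C,
     is_series (V := C_NormedModule)
       (fun n => RtoC (INR (binom n p)) * Rrem n y)
       (cexp y * Cpow y (S p) / cfact (S p))).
Proof.
  split.
  - intros y x Hx. apply cvn_is_series.
    assert (HD : Cpow (1 - x) (S p) <> 0).
    { apply Cpow_nz. intro H. apply Hx. replace x with (1 - (1 - x)) by ring. rewrite H. ring. }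
    set (D := Cpow (1 - x) (S p)) in *.
    assert (Hc : cvn (fun N => Bs x p (S N) * Rrem N y + / D * (Cpow x p * E N y + (-1) *
                   csum (fun j => Cpow x (p - j) * Cpow (1 - x) j * Fs j (x * y) N) p))
                 (0 + / D * (Cpow x p * cexp y + (-1) *
                   csum (fun j => Cpow x (p - j) * Cpow (1 - x) j * (Cpow (x * y) j / cfact j * cexp (x * y))) p))).
    { apply cvn_plus. apply BR_cv. apply cvn_scal. apply cvn_plus. apply cvn_scal. apply E_cv.
      apply cvn_scal.
      apply (cvn_csum (fun j N => Cpow x (p - j) * Cpow (1 - x) j * Fs j (x * y) N)).
      intros j _. apply cvn_scal. apply Fs_cv. }
    rewrite csum_final in Hc.
    eapply cvn_eq.
    + eapply cvn_ext. 2: exact Hc. intros N. symmetry.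
      transitivity (csum (fun n => bC n p * Rrem n y * Cpow x n) N). reflexivity.
      rewrite (abel x y p N). f_equal.
      transitivity (/ D * (D * csum (fun k => Cpow y k / cfact k * Bs x p k) N)).
      field. exact HD. unfold D. rewrite T_id. ring.
    + field. exact HD.
  - intros y. apply cvn_is_series.
    assert (Hc : cvn (fun N => Bs 1 p (S N) * Rrem N y + Fs (S p) y N)
                     (0 + Cpow y (S p) / cfact (S p) * cexp y)).
    { apply cvn_plus. apply BR_cv. apply Fs_cv. }
    eapply cvn_eq.
    + eapply cvn_ext. 2: exact Hc. intros N. symmetry.
      transitivity (csum (fun n => bC n p * Rrem n y) N). reflexivity.
      rewrite (csum_ext _ (fun n => bC n p * Rrem n y * Cpow 1 n)).
      rewrite (abel 1 y p N). f_equal.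
      unfold Fs. apply csum_ext. intros k _. rewrite Bs_one. unfold Cdiv. ring.
      intros k _. rewrite Cpow_1_l. unfold bC. ring.
    + unfold Cdiv. ring.
Qed.
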